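(* Assume $q>2$. Let $d\ge1$ and let $P\in A$ be a monic irreducible polynomial of degree $d$. Then $\sum_{i=0}^{d-1}l_i^{-1}$ is $P$-integral and $$\operatorname{BG}_{q^d-2}\equiv\sum_{i=0}^{d-1}\frac{1}{l_i}\pmod P.$$
   Context: $A=\mathbb{F}_q[\theta]$, $A^+(k)$ the monic polynomials of degree $k$; $\operatorname{BG}_n=\sum_{k\ge0}\sum_{a\in A^+(k)}a^{n}\in A$ (a finite sum since the inner sums vanish for large $k$). $l_0=1$, $l_i=(\theta-\theta^{q^i})l_{i-1}$ for $i\ge1$. *)

(* Defs.v *)
From HB Require Import structures.
From mathcomp Require Import all_boot all_order all_algebra.
From mathcomp Require Import fraction.
Set Implicit Arguments. Unset Strict Implicit. Unset Printing Implicit Defensive.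
Import GRing.Theory.
Local Open Scope ring_scope.

(* A = F[theta], theta = 'X, F a finite field with q = #|F| elements. *)

Definition monic_of (F : finFieldType) (k : nat) (c : {ffun 'I_k -> F}) : {poly F} :=
  'X^k + \sum_(i < k) (c i)%:P * 'X^i.

(* S_k(n) = sum_{a in A^+(k)} a^n ; A^+(k) is enumerated bijectively by the
   coefficient vectors c of its lower-order terms. *)
Definition Spow (F : finFieldType) (k n : nat) : {poly F} :=
  \sum_(c : {ffun 'I_k -> F}) (monic_of c) ^+ n.

Definition ell (F : finFieldType) (i : nat) : {poly F} :=
  \prod_(1 <= j < i.+1) ('X - 'X^(#|F| ^ j)).

Notation "x %:F" := (@FracField.tofrac _ x) : ring_scope.

(* Main.v *)
Require Import Defs.
From HB Require Import structures.
From mathcomp Require Import all_boot all_order all_algebra all_field.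
From mathcomp Require Import ring.
Set Implicit Arguments. Unset Strict Implicit. Unset Printing Implicit Defensive.
Import GRing.Theory.
Local Open Scope ring_scope.

Section Gen.
Variables (F : finFieldType) (L : fieldType) (iota : {rmorphism F -> L}) (t : L).
Local Notation q := #|F|.

Lemma q_gt1 : (1 < q)%N. Proof. exact: finNzRing_gt1. Qed.

Lemma qnat n : [pchar L].-nat (q ^ n)%N.
Proof.
have [p pp pF] := finPcharP F.
have pL := rmorph_pchar iota pF.
rewrite pnatX; apply/orP; left.
have := card_pprimeChar pF => /= ->.
rewrite pnatX; apply/orP; left.
by rewrite pnatE // (pcharf_eq pL) /= inE.
Qed.

Lemma frobDn n (x y : L) : (x + y) ^+ (q ^ n)%N = x ^+ (q ^ n)%N + y ^+ (q ^ n)%N.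
Proof. exact: exprDn_pchar (qnat n). Qed.

Lemma frobD (x y : L) : (x + y) ^+ q = x ^+ q + y ^+ q.
Proof. by have := frobDn 1 x y; rewrite expn1. Qed.

Lemma frobNn n (x : L) : (- x) ^+ (q ^ n)%N = - x ^+ (q ^ n)%N.
Proof.
apply/eqP; rewrite -subr_eq0 opprK -frobDn addNr expr0n.
by rewrite expn_eq0 -(prednK (ltnW q_gt1)).
Qed.

Lemma frobBn n (x y : L) : (x - y) ^+ (q ^ n)%N = x ^+ (q ^ n)%N - y ^+ (q ^ n)%N.
Proof. by rewrite frobDn frobNn. Qed.

Lemma frobN (x : L) : (- x) ^+ q = - x ^+ q.
Proof. by have := frobNn 1 x; rewrite expn1. Qed.

Lemma frobC a : iota a ^+ q = iota a.
Proof. by rewrite -rmorphXn expf_card. Qed.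

Lemma qR0 : (q%:R : L) = 0.
Proof.
have [p pp pF] := finPcharP F.
have pL := rmorph_pchar iota pF.
apply/eqP; rewrite -(dvdn_pcharf pL).
have := card_pprimeChar pF => /= ->.
rewrite dvdn_exp //.
have := card_pprimeChar pF => /= E.
case: (logn _ _) E => // E. by move: q_gt1; rewrite E.
Qed.

Lemma frob_sum (I : Type) (r : seq I) (Pr : pred I) (f : I -> L) :
  (\sum_(i <- r | Pr i) f i) ^+ q = \sum_(i <- r | Pr i) f i ^+ q.
Proof.
apply: (big_morph (fun x => x ^+ q)); first exact: frobD.
by rewrite expr0n -(prednK (ltnW q_gt1)).
Qed.


Fixpoint E (k : nat) (x : L) : L :=
  if k is k'.+1 then E k' x ^+ q - (E k' (t ^+ k')) ^+ q.-1 * E k' x else x.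
Definition Z k := E k (t ^+ k).

Lemma E_S k x : E k.+1 x = E k x ^+ q - Z k ^+ q.-1 * E k x.
Proof. by []. Qed.

Lemma E_add k x y : E k (x + y) = E k x + E k y.
Proof. by elim: k => //= k IH; rewrite IH frobD; ring. Qed.

Lemma E_scal k a x : E k (iota a * x) = iota a * E k x.
Proof.
elim: k => //= k IH; rewrite IH exprMn frobC; ring.
Qed.

Lemma E0 k : E k 0 = 0.
Proof. by elim: k => //= k ->; rewrite expr0n -(prednK (ltnW q_gt1)) /=; ring. Qed.

Lemma E_vanish k i : (i < k)%N -> E k (t ^+ i) = 0.
Proof.
elim: k => // k IH; rewrite ltnS leq_eqVlt => /orP[/eqP->|/IH]; rewrite E_S.
  by rewrite /Z -{1}(prednK (ltnW q_gt1)) exprS; ring.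
by move=> ->; rewrite expr0n -(prednK (ltnW q_gt1)) /=; ring.
Qed.

Lemma E_coef k : exists alpha : nat -> L,
  alpha k = 1 /\ forall x, E k x = \sum_(i < k.+1) alpha i * x ^+ (q ^ i)%N.
Proof.
elim: k => [|k [al [alk Hal]]].
  by exists (fun _ => 1); split=> // x; rewrite big_ord1 expn0 expr1 mul1r.
exists (fun i => (if i is j.+1 then al j ^+ q else 0) - (if (i <= k)%N then Z k ^+ q.-1 * al i else 0)).
split; first by rewrite ltnn subr0 alk expr1n.
move=> x; rewrite E_S Hal frob_sum.
under [in RHS]eq_bigr do rewrite mulrBl.
rewrite sumrB mulr_sumr; congr (_ - _).
  rewrite [in RHS]big_ord_recl /= mul0r add0r; apply: eq_bigr => i _.
  by rewrite exprMn -exprM expnSr.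
rewrite [in RHS]big_ord_recr /= ltnn mul0r addr0; apply: eq_bigr => i _.
by rewrite /= -ltnS ltn_ord mulrA.
Qed.



Lemma Z_prod k : Z k = \prod_(j < k) (t ^+ (q ^ k)%N - t ^+ (q ^ j)%N).
Proof.
have [al [alk Hal]] := E_coef k.
pose f := \prod_(j < k) ('X - (t ^+ (q ^ j)%N)%:P) : {poly L}.
have mf : f \is monic by apply: monic_prod => j _; apply: monicXsubC.
have sf : size f = k.+1.
  by rewrite size_prod_XsubC /index_enum unlock -enumT size_enum_ord.
have fk : f`_k = 1 by move/monicP: mf; rewrite lead_coefE sf.
have key : \sum_(j < k.+1) al j * f.[t ^+ (q ^ j)%N] = Z k.
  rewrite (eq_bigr (fun j : 'I_k.+1 => \sum_(i < k.+1) al j * (f`_i * (t ^+ (q ^ j)%N) ^+ i))); last first.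
    by move=> j _; rewrite (horner_coef_wide _ (eq_leq sf)) mulr_sumr.
  rewrite exchange_big /=.
  rewrite (eq_bigr (fun i : 'I_k.+1 => f`_i * E k (t ^+ i))); last first.
    move=> i _; rewrite Hal mulr_sumr; apply: eq_bigr => j _.
    by rewrite exprAC; ring.
  rewrite big_ord_recr /= fk mul1r big1 ?add0r // => i _.
  by rewrite E_vanish ?mulr0.
rewrite -key big_ord_recr /= alk mul1r big1 ?add0r.
  by rewrite horner_prod; apply: eq_bigr => j _; rewrite hornerXsubC.
move=> j _; rewrite horner_prod (bigD1 j) //= hornerXsubC subrr mul0r mulr0 //.
Qed.


Lemma q_pos : (0 < q)%N. Proof. exact: ltnW q_gt1. Qed.
Lemma qE : q = q.-1.+1. Proof. by rewrite prednK // q_pos. Qed.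

Lemma Z_succ k : Z k.+1 = (t ^+ (q ^ k.+1)%N - t) * Z k ^+ q.
Proof.
rewrite !Z_prod big_ord_recl expn0 expr1 -prodrXl; congr (_ * _).
apply: eq_bigr => j _.
by rewrite -[q in RHS]expn1 frobBn expn1 -!exprM -!expnSr.
Qed.

Definition ell_t k := \prod_(1 <= j < k.+1) (t - t ^+ (q ^ j)%N).

Fixpoint C k := if k is k'.+1 then - C k' * Z k' ^+ q.-1 else 1.

Lemma C_ell k : C k * ell_t k = Z k.
Proof.
elim: k => [|k IH]; first by rewrite /ell_t big_geq // mulr1.
rewrite /= /ell_t big_nat_recr //= -/(ell_t k) Z_succ.
rewrite (_ : Z k ^+ q = Z k * Z k ^+ q.-1); last by rewrite -exprS -qE.
rewrite -IH.
ring.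
Qed.

Lemma deriv_prod_eval (s : seq L) (u : L) :
  \prod_(r <- s) (u - r) != 0 ->
  (\prod_(r <- s) ('X - r%:P))^`().[u] = (\prod_(r <- s) (u - r)) * \sum_(r <- s) (u - r)^-1.
Proof.
elim: s => [|r s IH]; first by rewrite !big_nil derivC horner0 mulr0.
rewrite !big_cons mulf_eq0 negb_or => /andP[ur Hs].
rewrite derivM hornerD !hornerM IH // derivB derivX derivC subr0 hornerC hornerXsubC.
rewrite horner_prod; under eq_bigr do rewrite hornerXsubC.
rewrite mulrDr; congr (_ + _); first by rewrite mul1r mulrAC mulfV // mul1r.
by rewrite mulrA.
Qed.

Lemma dim1 (u : L) : u ^+ q - u != 0 ->
  \sum_(a : F) (u - iota a)^-1 = - (u ^+ q - u)^-1.
Proof.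
move=> nz.
have G : \prod_(r <- map iota (enum F)) ('X - r%:P) = 'X^q - 'X :> {poly L}.
  have := congr1 (map_poly iota) (finField_genPoly F).
  rewrite rmorphB /= map_polyXn map_polyX rmorph_prod /= => ->.
  by rewrite big_map big_enum; apply: eq_bigr => a _; rewrite map_polyXsubC.
have Gu : \prod_(r <- map iota (enum F)) (u - r) = u ^+ q - u.
  have := congr1 (fun p => p.[u]) G; rewrite horner_prod /= !hornerE => <-.
  by apply: eq_bigr => r _; rewrite hornerXsubC.
have := @deriv_prod_eval (map iota (enum F)) u; rewrite Gu => /(_ nz).
rewrite G derivB derivXn derivX -mulr_natr.
have -> : ((q%:R : {poly L}) = 0) by rewrite -(rmorph_nat (@polyC L)) qR0.
rewrite mulr0 sub0r hornerN hornerC big_map big_enum /= => H.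
apply: (mulfI nz); rewrite -H mulrN mulfV //.
Qed.

Lemma dimZ (Y W : L) : Y ^+ q - W ^+ q.-1 * Y != 0 ->
  \sum_(a : F) (Y + iota a * W)^-1 = - W ^+ q.-1 / (Y ^+ q - W ^+ q.-1 * Y).
Proof.
have [->|W0] := eqVneq W 0.
  have q1 : (q.-1 != 0)%N by rewrite -lt0n -ltnS -qE q_gt1.
  rewrite expr0n (negbTE q1) /= mul0r oppr0 mul0r => _.
  under eq_bigr do rewrite mulr0 addr0.
  by rewrite sumr_const -mulr_natr qR0 mulr0.
move=> nz.
pose u := - (Y / W).
have Wm0 : W ^+ q.-1 != 0 by rewrite expf_neq0.
have uq : u ^+ q - u = - (Y ^+ q - W ^+ q.-1 * Y) / (W * W ^+ q.-1).
  have Wq : W ^+ q = W * W ^+ q.-1 by rewrite -exprS -qE.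
  rewrite /u frobN expr_div_n Wq; field.
  by rewrite W0 Wm0.
have uq0 : u ^+ q - u != 0.
  by rewrite uq mulf_neq0 ?oppr_eq0 ?invr_eq0 ?mulf_neq0.
have E1 a : Y + iota a * W = - W * (u - iota a) by rewrite /u; field.
under eq_bigr do rewrite E1 invfM.
rewrite -mulr_sumr dim1 // uq; field.
by rewrite nz W0 Wm0 !oppr_eq0 nz W0.
Qed.



Definition ext k (a : F) (c : {ffun 'I_k -> F}) : {ffun 'I_k.+1 -> F} :=
  [ffun i => if unlift ord_max i is Some j then c j else a].

Lemma split_sum k (g : {ffun 'I_k.+1 -> F} -> L) :
  \sum_c g c = \sum_(a : F) \sum_(c : {ffun 'I_k -> F}) g (ext a c).
Proof.
rewrite pair_big /=.
rewrite (reindex (fun p : F * {ffun 'I_k -> F} => ext p.1 p.2)) //=.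
exists (fun c => (c ord_max, [ffun j => c (lift ord_max j)])) => [[a c]|c] _ /=.
  rewrite /ext ffunE unlift_none; congr pair; apply/ffunP => j.
  by rewrite !ffunE liftK.
by apply/ffunP => i; rewrite /ext !ffunE; case: unliftP => [j ->|->]; rewrite ?ffunE.
Qed.

Definition vl k (c : {ffun 'I_k -> F}) := \sum_(i < k) iota (c i) * t ^+ i.

Lemma vl_ext k a (c : {ffun 'I_k -> F}) : vl (ext a c) = vl c + iota a * t ^+ k.
Proof.
rewrite /vl big_ord_recr /= /ext ffunE unlift_none; congr (_ + _).
apply: eq_bigr => i _; rewrite ffunE.
have -> : widen_ord (leqnSn k) i = lift ord_max i.
  by apply: val_inj; rewrite /= /bump leqNgt ltn_ord.
by rewrite liftK.
Qed.

Lemma main_sum k y : E k y != 0 ->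
  \sum_(c : {ffun 'I_k -> F}) (y + vl c)^-1 = C k / E k y.
Proof.
elim: k y => [|k IH] y Hy.
  under eq_bigr do rewrite /vl big_ord0 addr0.
  by rewrite sumr_const card_ffun card_ord expn0 /= mul1r.
rewrite split_sum.
have nzY a : E k (y + iota a * t ^+ k) != 0.
  rewrite E_add E_scal -/(Z k); apply: contraNneq Hy => H.
  have HY : E k y = - (iota a * Z k) by apply/eqP; rewrite -addr_eq0 H.
  rewrite E_S HY frobN exprMn frobC (_ : Z k ^+ q = Z k * Z k ^+ q.-1).
    by apply/eqP; ring.
  by rewrite -exprS -qE.
rewrite (eq_bigr (fun a : F => C k / E k (y + iota a * t ^+ k))); last first.
  move=> a _; rewrite -IH //; apply: eq_bigr => c _.
  by rewrite vl_ext addrA addrAC.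
under eq_bigr do rewrite E_add E_scal -/(Z k).
rewrite -mulr_sumr dimZ; last by rewrite -E_S.
by rewrite E_S /=; ring.
Qed.

End Gen.

Section KSec.
Variables (F : finFieldType) (P : {poly F}) (hI : monic_irreducible_poly P).
Variables (d : nat) (sP : size P = d.+1).
Local Notation q := #|F|.

Definition K := {poly %/ P with hI}.
Definition ev : {poly F} -> K := in_qpoly P.
HB.instance Definition _ := GRing.RMorphism.copy ev (in_qpoly P).
Definition io : F -> K := ev \o polyC.
Definition th : K := ev 'X.

Lemma evB a b : ev (a - b) = ev a - ev b. Proof. exact: rmorphB. Qed.
Lemma evD a b : ev (a + b) = ev a + ev b. Proof. exact: rmorphD. Qed.
Lemma evM a b : ev (a * b) = ev a * ev b. Proof. exact: rmorphM. Qed.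

Lemma ev_sum (I : Type) (r : seq I) (Pr : pred I) (f : I -> {poly F}) :
  ev (\sum_(i <- r | Pr i) f i) = \sum_(i <- r | Pr i) ev (f i).
Proof. exact: rmorph_sum. Qed.
Lemma ev_prod (I : Type) (r : seq I) (Pr : pred I) (f : I -> {poly F}) :
  ev (\prod_(i <- r | Pr i) f i) = \prod_(i <- r | Pr i) ev (f i).
Proof. exact: rmorph_prod. Qed.
Lemma evX a n : ev (a ^+ n) = ev a ^+ n. Proof. exact: rmorphXn. Qed.

Lemma ev_eq0 p : (ev p == 0) = (P %| p).
Proof. by rewrite /ev -val_eqE /= /in_qpoly /= (mk_monicE hI) dvdpE. Qed.

Lemma cardK : #|K| = (q ^ d)%N.
Proof. by rewrite card_qfpoly sP. Qed.

Lemma ev_vl k (c : {ffun 'I_k -> F}) :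
  ev (\sum_(i < k) (c i)%:P * 'X^i) = vl io th c.
Proof.
by rewrite rmorph_sum; apply: eq_bigr => i _; rewrite rmorphM rmorphXn.
Qed.

Lemma ev_monic k (c : {ffun 'I_k -> F}) : ev (monic_of c) = th ^+ k + vl io th c.
Proof. by rewrite /monic_of rmorphD rmorphXn; congr (_ + _); exact: ev_vl. Qed.

Lemma ev_ell i : ev (ell F i) = ell_t F th i.
Proof.
by rewrite /ell rmorph_prod; apply: eq_bigr => j _; rewrite rmorphB !rmorphXn.
Qed.


Lemma q_gt1' : (1 < q)%N. Proof. exact: finNzRing_gt1. Qed.

Lemma vl_inj : injective (@vl F K io th d).
Proof.
move=> c1 c2 H.
pose p := \sum_(i < d) (c1 i - c2 i)%:P * 'X^i.
have evp : ev p = 0.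
  rewrite /p (eq_bigr (fun i : 'I_d => (c1 i)%:P * 'X^i - (c2 i)%:P * 'X^i)); last first.
    by move=> i _; rewrite rmorphB mulrBl.
  by rewrite sumrB evB !ev_vl H subrr.
have p0 : p = 0.
  apply/eqP; apply: contraT => pn0.
  have := @dvdp_leq _ P p pn0; rewrite -ev_eq0 evp eqxx => /(_ isT).
  rewrite sP ltnNge => /negP[].
  apply: (leq_trans (size_sum _ _ _)); apply/bigmax_leqP => i _.
  by rewrite mul_polyC (leq_trans (size_scale_leq _ _)) // size_polyXn.
apply/ffunP => j; apply/eqP; rewrite -subr_eq0.
have := congr1 (fun r : {poly F} => r`_j) p0; rewrite coef0 /p coef_sum => <-.
rewrite (bigD1 j) //= coefCM coefXn eqxx mulr1 big1 ?addr0 // => i ij.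
by rewrite coefCM coefXn (_ : (j == i :> nat) = false) ?mulr0 // eq_sym; exact: negbTE ij.
Qed.


Lemma ev_surj (x : K) : exists p, x = ev p.
Proof.
exists (val x); apply: val_inj; rewrite /ev /= Pdiv.CommonRing.rmodp_small //.
exact: size_mk_monic.
Qed.

Lemma ev_poly p : ev p = \sum_(i < size p) io (p`_i) * th ^+ i.
Proof.
rewrite -{1}(coefK p) poly_def ev_sum; apply: eq_bigr => i _.
by rewrite -mul_polyC evM evX.
Qed.

Lemma io_frob n a : io a ^+ (q ^ n) = io a.
Proof.
elim: n => [|n IH]; first by rewrite expn0 expr1.
by rewrite expnS exprM (frobC io) IH.
Qed.

Lemma all_fix j : th ^+ (q ^ j) = th -> forall x : K, x ^+ (q ^ j) = x.
Proof.
move=> H x; have [p ->] := ev_surj x; rewrite ev_poly.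
rewrite (big_morph (fun x : K => x ^+ (q ^ j)) (frobDn io j) (_ : 0 ^+ (q ^ j) = 0)); last first.
  by rewrite expr0n eqn0Ngt expn_gt0 (ltnW q_gt1').
by apply: eq_bigr => i _; rewrite exprMn io_frob exprAC H.
Qed.

Lemma t_frob j : (0 < j < d)%N -> th ^+ (q ^ j) != th.
Proof.
move=> /andP[j0 jd]; apply/negP => /eqP H.
have R := all_fix H.
pose r := 'X^(q ^ j) - 'X : {poly K}.
have q1 : (1 < q ^ j)%N.
  by apply: (leq_trans q_gt1'); rewrite -{1}(expn1 q) leq_pexp2l // ltnW // q_gt1'.
have sr : size r = (q ^ j).+1.
  by rewrite size_polyDl ?size_polyXn // size_polyN size_polyX ltnS.
have r0 : r != 0 by rewrite -size_poly_eq0 sr.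
have := @max_poly_roots _ r (enum K) r0.
have -> : all (root r) (enum K).
  by apply/allP => x _; rewrite /root !hornerE R subrr.
rewrite enum_uniq => /(_ isT isT); rewrite -cardE cardK sr ltnS leqNgt.
by rewrite ltn_exp2l ?q_gt1' // jd.
Qed.

Lemma Z_nz k : (k < d)%N -> Z F th k != 0.
Proof.
move=> kd; rewrite (Z_prod io); apply/prodf_neq0 => j _; rewrite subr_eq0.
apply/negP => /eqP H.
have : (th ^+ (q ^ (k - j)) - th) ^+ (q ^ j) == 0.
  by rewrite (frobBn io) -exprM -expnD subnK ?H ?subrr // ltnW // ltn_ord.
rewrite expf_eq0 expn_gt0 (ltnW q_gt1') subr_eq0 /=; apply/negP.
apply: t_frob; rewrite subn_gt0 ltn_ord /=.
exact: leq_ltn_trans (leq_subr j k) kd.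
Qed.

Lemma ell_nz k : (k < d)%N -> ell_t F th k != 0.
Proof.
by move=> kd; apply: contraNneq (Z_nz kd) => H; rewrite -(C_ell io) H mulr0.
Qed.


Lemma inv_pow (d1 : (1 <= d)%N) (q2 : (2 < q)%N) (x : K) : x ^+ (q ^ d - 2) = x^-1.
Proof.
have Q2 : (2 < q ^ d)%N.
  by apply: (leq_trans q2); rewrite -{1}(expn1 q) leq_pexp2l // ltnW // q_gt1'.
have [->|x0] := eqVneq x 0.
  by rewrite invr0 expr0n subn_eq0 leqNgt Q2.
apply: (mulIf x0); rewrite mulVf //; apply: (mulIf x0).
rewrite mul1r -mulrA -expr2 -exprD subnK; last exact: ltnW.
by rewrite -cardK expf_card.
Qed.

Lemma sumK_id (q2 : (2 < q)%N) (d1 : (1 <= d)%N) : \sum_(x : K) x = 0.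
Proof.
have [y /andP[y0 y1]] : exists y : K, (y != 0) && (y != 1).
  apply/existsP; apply: contraT; rewrite negb_exists => /forallP H.
  have : (#|K| <= 2)%N.
    apply: leq_trans (subset_leq_card (_ : K \subset [:: 0; 1])) (card_size _).
    apply/subsetP => x _; have := H x; rewrite negb_and !negbK.
    by case/orP => /eqP ->; rewrite !inE eqxx ?orbT.
  rewrite cardK leqNgt => /negP[].
  by apply: (leq_trans q2); rewrite -{1}(expn1 q) leq_pexp2l // ltnW // q_gt1'.
have : \sum_(x : K) x = y * \sum_(x : K) x.
  by rewrite mulr_sumr; apply: (reindex_inj (mulfI y0)).
move/eqP; rewrite -subr_eq0 -{1}(mul1r (\sum__ _)) -mulrBl mulf_eq0 subr_eq0 eq_sym.
by rewrite (negbTE y1) /= => /eqP.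
Qed.

Lemma sumK_inv (q2 : (2 < q)%N) (d1 : (1 <= d)%N) : \sum_(x : K) x^-1 = 0.
Proof. by rewrite -[RHS](sumK_id q2 d1) [RHS](reindex_inj invr_inj). Qed.

Lemma big_zero (q2 : (2 < q)%N) (d1 : (1 <= d)%N) m (h : K) :
  \sum_(c : {ffun 'I_(d + m) -> F}) (h + vl io th c)^-1 = 0.
Proof.
elim: m h => [|m IH] h.
  rewrite addn0.
  have bij : bijective (@vl F K io th d).
    by apply: (@inj_card_bij _ _ _ vl_inj); rewrite cardK card_ffun card_ord.
  rewrite (_ : \sum_c _ = \sum_(x : K) (h + x)^-1); last first.
    by rewrite (reindex (fun c : {ffun 'I_d -> F} => vl io th c)) //; apply: onW_bij; exact: bij.
  transitivity (\sum_(x : K) x^-1); last exact: sumK_inv q2 d1.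
  by rewrite [RHS](reindex_inj (addrI h)).
rewrite addnS split_sum big1 // => a _.
rewrite -[RHS](IH (h + io a * th ^+ (d + m))); apply: eq_bigr => c _.
by rewrite vl_ext addrA addrAC.
Qed.

Lemma T_small k : (k < d)%N ->
  \sum_(c : {ffun 'I_k -> F}) (th ^+ k + vl io th c)^-1 = (ell_t F th k)^-1.
Proof.
move=> kd; rewrite (main_sum io); last exact: Z_nz kd.
rewrite -[E _ _ _ _]/(Z F th k) -(C_ell io) invfM mulrA mulfV ?mul1r //.
by apply: contraNneq (Z_nz kd) => H; rewrite -(C_ell io) H mul0r.
Qed.

Lemma evS (q2 : (2 < q)%N) (d1 : (1 <= d)%N) k :
  ev (Spow F k (q ^ d - 2)) = \sum_(c : {ffun 'I_k -> F}) (th ^+ k + vl io th c)^-1.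
Proof.
by rewrite /Spow ev_sum; apply: eq_bigr => c _; rewrite evX ev_monic inv_pow.
Qed.

End KSec.

Lemma prod_inv_sum (R : fieldType) n (x : 'I_n -> R) : (forall i, x i != 0) ->
  (\prod_(i < n) x i) * \sum_(i < n) (x i)^-1 = \sum_(i < n) \prod_(j < n | j != i) x j.
Proof.
move=> nz; rewrite mulr_sumr; apply: eq_bigr => i _.
by rewrite (bigD1 i) //= mulrAC mulfV // mul1r.
Qed.

Unset Implicit Arguments.

Theorem corollary5p2 (F : finFieldType) (d : nat) (P : {poly F}) (N : nat) :
  (2 < #|F|)%N -> (1 <= d)%N ->
  P \is monic -> irreducible_poly P -> size P = d.+1 ->
  (forall k, (N <= k)%N -> Spow F k (#|F| ^ d - 2) = 0) ->
  exists a b : {poly F},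
    [/\ ~~ (P %| b),
        b%:F * (\sum_(i < d) ((ell F i)%:F)^-1) = a%:F
      & P %| b * (\sum_(k < N) Spow F k (#|F| ^ d - 2)) - a].
Proof.
move=> q2 d1 mP iP sP HN.
have hI : monic_irreducible_poly P := (iP, mP).
have eK (i : 'I_d) : ev hI (ell F i) != 0 by rewrite ev_ell (ell_nz hI sP).
have eN (i : 'I_d) : ell F i != 0.
  by apply: contraNneq (eK i) => ->; rewrite rmorph0.
exists (\sum_(i < d) \prod_(j < d | j != i) ell F j), (\prod_(i < d) ell F i).
split.
- rewrite -(ev_eq0 hI) ev_prod; apply/prodf_neq0 => i _; exact: eK.
- rewrite rmorph_prod rmorph_sum prod_inv_sum; last by move=> i; rewrite tofrac_eq0.
  by apply: eq_bigr => i _; rewrite rmorph_prod.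
have BG : \sum_(k < N) Spow F k (#|F| ^ d - 2) =
          \sum_(0 <= k < d) Spow F k (#|F| ^ d - 2) + \sum_(d <= k < N + d) Spow F k (#|F| ^ d - 2).
  rewrite -big_cat_nat ?leq_addl //= (big_cat_nat (leq0n N) (leq_addr d N)) /= big_mkord.
  rewrite [X in _ = _ + X](_ : _ = 0) ?addr0 //.
  rewrite big_nat_cond; apply: big1 => k /andP[/andP[Nk _] _]; exact: HN.
rewrite -(ev_eq0 hI) BG evB evM evD ev_prod !ev_sum.
rewrite [X in _ * (_ + X)](_ : _ = 0) ?addr0; last first.
  rewrite big_nat_cond; apply: big1 => k /andP[/andP[dk _] _]. move: (evS hI sP q2 d1 k) => ->.
  have := @big_zero _ _ hI _ sP q2 d1 (k - d) (th hI ^+ k); rewrite subnKC //.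
rewrite big_mkord.
have -> : \sum_(k < d) ev hI (Spow F k (#|F| ^ d - 2)) = \sum_(k < d) (ev hI (ell F k))^-1.
  apply: eq_bigr => k _.
  by move: (evS hI sP q2 d1 k) => ->; rewrite (T_small hI sP) // ev_ell.
rewrite prod_inv_sum // subr_eq0; apply/eqP; apply: eq_bigr => i _.
by rewrite ev_prod.
Qed.
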